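(* Let $X$ be a nonsingular projective toric variety. If $\beta\in H_2(X,\mathbb{Z})$ satisfies $\int_\beta A>0$ for every ample divisor $A$, then the set $\{D \text{ toric divisor} : \int_\beta D>0\}$ contains a primitive set.
   Context: Toric divisors are the torus-invariant prime divisors of $X$. A primitive set is a set $\{D_1,\ldots,D_k\}$ of toric divisors with $D_1\cap\cdots\cap D_k=\emptyset$ such that every proper subset has nonempty intersection. *)

(* Defs.v *)
(* Combinatorial model of a nonsingular projective toric
   variety X = X_Sigma via its fan Sigma in N_Q = Q^d, N = Z^d. *)
From HB Require Import structures.
From mathcomp Require Import all_boot all_order all_algebra.
Set Implicit Arguments. Unset Strict Implicit. Unset Printing Implicit Defensive.
Import Order.TTheory GRing.Theory Num.Theory.
Local Open Scope ring_scope.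

Section Toric.
Variables (d n : nat).
(* v i : primitive generator in N = Z^d of the i-th ray; toric divisor D_i. *)
Variable v : 'I_n -> 'rV[int]_d.
(* The fan: cones are encoded by the sets of indices of their rays. *)
Variable Sigma : {set {set 'I_n}}.

Definition vQ (i : 'I_n) : 'rV[rat]_d := map_mx (fun z : int => z%:~R) (v i).

Definition cone (S : {set 'I_n}) (x : 'rV[rat]_d) : Prop :=
  exists lam : 'I_n -> rat,
    (forall i, 0 <= lam i) /\ (forall i, i \notin S -> lam i = 0) /\
    x = \sum_(i < n) lam i *: vQ i.

Definition smooth_cone (S : {set 'I_n}) : Prop :=
  exists (B : 'M[int]_d) (g : 'I_n -> 'I_d),
    B \in unitmx /\ {in S &, injective g} /\
    (forall i, i \in S -> row (g i) B = v i).

Definition is_fan : Prop :=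
  [/\ (forall S T : {set 'I_n}, S \in Sigma -> T \subset S -> T \in Sigma),
      (forall i : 'I_n, [set i] \in Sigma) &
      (forall S T : {set 'I_n}, S \in Sigma -> T \in Sigma ->
         forall x, (cone S x /\ cone T x) <-> cone (S :&: T) x)].

Definition smooth_fan : Prop := forall S : {set 'I_n}, S \in Sigma -> smooth_cone S.

Definition complete_fan : Prop :=
  forall x : 'rV[rat]_d, exists2 S, S \in Sigma & cone S x.

Definition maximal_cone (S : {set 'I_n}) : Prop :=
  S \in Sigma /\ (forall T : {set 'I_n}, T \in Sigma -> S \subset T -> T = S).

Definition pairing (m : 'rV[rat]_d) (u : 'rV[rat]_d) : rat :=
  \sum_(k < d) m 0 k * u 0 k.

(* The torus-invariant divisor D = sum_i c i * D_i is ample iff its support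
   function is strictly convex: for every maximal cone sigma there is m_sigma
   with <m_sigma, v_i> = - c_i for i in sigma and <m_sigma, v_j> > - c_j
   for j not in sigma (Cox-Little-Schenck, Lemma 6.1.13/Thm 6.1.14). *)
Definition ample (c : 'I_n -> int) : Prop :=
  forall S : {set 'I_n}, maximal_cone S ->
    exists m : 'rV[rat]_d,
      (forall i, i \in S -> pairing m (vQ i) = - (c i)%:~R) /\
      (forall j, j \notin S -> - (c j)%:~R < pairing m (vQ j)).

Definition projective_fan : Prop := exists c, ample c.

Definition smooth_projective_toric : Prop :=
  [/\ is_fan, smooth_fan, complete_fan & projective_fan].

(* H_2(X,Z) = { beta in Z^n : sum_i beta_i v_i = 0 }, with int_beta D_i = beta i *)
Definition curve_class (beta : 'I_n -> int) : Prop :=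
  \sum_(i < n) beta i *: v i = 0.

Definition intersect (beta c : 'I_n -> int) : int := \sum_(i < n) c i * beta i.

(* D_{i1} cap ... cap D_{ik} is nonempty iff {i1..ik} spans a cone of Sigma
   (orbit-cone correspondence). *)
Definition nonempty_intersection (P : {set 'I_n}) : Prop := P \in Sigma.

Definition primitive_set (P : {set 'I_n}) : Prop :=
  ~ nonempty_intersection P /\
  (forall Q : {set 'I_n}, Q \proper P -> nonempty_intersection Q).

End Toric.

(* Main.v *)
Require Import Defs.
From mathcomp Require Import all_boot all_order all_algebra.
From mathcomp Require Import ring.
Import Order.TTheory GRing.Theory Num.Theory.
Local Open Scope ring_scope.

Lemma pairing_sum0 (d n : nat) (v : 'I_n -> 'rV[int]_d) (beta : 'I_n -> int)
  (m : 'rV[rat]_d) : curve_class v beta ->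
  \sum_(i < n) (beta i)%:~R * pairing m (vQ v i) = 0 :> rat.
Proof.
move=> hb.
rewrite /pairing.
under eq_bigr do rewrite big_distrr /=.
rewrite exchange_big /=.
apply: big1 => k _.
have E : \sum_(i < n) (beta i)%:~R * (m 0 k * vQ v i 0 k)
   = m 0 k * ((\sum_(i < n) beta i *: v i) 0 k)%:~R :> rat.
  rewrite summxE rmorph_sum big_distrr /=.
  apply: eq_bigr => i _; rewrite /vQ !mxE intrM; ring.
by rewrite E hb mxE mulr0.
Qed.

Theorem corollary2p2 (d n : nat) (v : 'I_n -> 'rV[int]_d)
    (Sigma : {set {set 'I_n}}) :
  smooth_projective_toric v Sigma ->
  forall beta : 'I_n -> int, curve_class v beta ->
  (forall c : 'I_n -> int, ample v Sigma c -> 0 < intersect beta c) ->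
  exists P : {set 'I_n},
    primitive_set Sigma P /\ P \subset [set i | 0 < beta i].
Proof.
move=> [_ _ _ [c0 hc0]] beta hb hpos.
set Ps := [set i | 0 < beta i].
case: (boolP (Ps \in Sigma)) => PsS; last first.
  have := @arg_minnP _ Ps (fun Q : {set 'I_n} => (Q \subset Ps) && (Q \notin Sigma)) (fun Q : {set 'I_n} => #|Q|).
  rewrite subxx PsS => /(_ isT).
  case.
  move=> Q /andP [QP QS] Qmin.
  exists Q; split => //; split; first by apply/negP.
  move=> R RQ; rewrite /nonempty_intersection.
  apply/negPn/negP => RS.
  have := Qmin R; rewrite RS andbT.
  have RP : R \subset Ps by apply: subset_trans QP; exact: proper_sub RQ.
  by move=> /(_ RP); rewrite leqNgt proper_card.
exfalso.
have := @arg_maxnP _ Ps (fun Q : {set 'I_n} => (Ps \subset Q) && (Q \in Sigma)) (fun Q : {set 'I_n} => #|Q|).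
rewrite subxx PsS => /(_ isT).
case.
move=> S /andP [PS SS] Smax.
have mS : maximal_cone Sigma S.
  split => // T TS ST.
  apply/eqP; rewrite eq_sym eqEcard ST /=.
  by apply: Smax; rewrite TS andbT; apply: subset_trans ST.
have [m [hin hout]] := hc0 S mS.
have h1 := hpos c0 hc0.
have h2 : 0 < (intersect beta c0)%:~R :> rat by rewrite ltr0z.
have h3 := @pairing_sum0 _ _ v beta m hb.
have : (intersect beta c0)%:~R
   = \sum_(i < n) (beta i)%:~R * ((c0 i)%:~R + pairing m (vQ v i)) :> rat.
  rewrite /intersect rmorph_sum.
  have E2 : \sum_(i < n) (beta i)%:~R * (c0 i)%:~R
     + \sum_(i < n) (beta i)%:~R * pairing m (vQ v i)
     = \sum_(i < n) (beta i)%:~R * ((c0 i)%:~R + pairing m (vQ v i)) :> rat.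
    by rewrite -big_split /=; apply: eq_bigr => i _; rewrite mulrDr.
  rewrite -E2 h3 addr0; apply: eq_bigr => i _; rewrite rmorphM mulrC //.
move=> E; move: h2; rewrite E.
apply/negP; rewrite -leNgt.
apply: sumr_le0 => i _.
case: (boolP (i \in S)) => iS.
  by rewrite hin // addrN mulr0.
have iP : i \notin Ps by apply: contra iS; apply: (subsetP PS).
rewrite inE -leNgt in iP.
apply: mulr_le0_ge0; first by rewrite lerz0.
apply: ltW; have := hout i iS.
by rewrite -subr_gt0 opprK addrC.
Qed.
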